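(* Let $n=2m-1$, $m\ge1$, let $\mathcal{C}$ be the set of maximal flags and $\mathcal{P}$ the set of points of $\mathrm{PG}(n,q)$. For $i\in[n+1]$ let $T_i$ be the $|\mathcal{C}|\times|\mathcal{P}|$ matrix with $T_i(c,X)=1$ if $c$ has type $i$ with respect to $X$ and $0$ otherwise, and for $j\in[m]$ let $F_j=q^j\sum_{i=m-j+1}^{m}T_i-\sum_{i=m+1}^{m+j}T_i$. Let $E_1=I_{\mathcal{P}}-\frac1{|\mathcal{P}|}J_{\mathcal{P}}$. Then for every $j\in[m]$ there is a non-zero constant $\alpha_j$ with $T_{m-j+1}^\top F_j=\alpha_jE_1$, and $T_h^\top F_j=0$ for all $h<m-j+1$.
   Context: A maximal flag of $\mathrm{PG}(n,q)$ is $(U_1,\dots,U_n)$ with $U_1\subset\cdots\subset U_n$ subspaces of $\mathbb{F}_q^{n+1}$, $\dim U_i=i$. Its type with respect to a point $X$ is the smallest $k\in[n]$ with $X\subseteq U_k$, and $n+1$ otherwise. $I_{\mathcal{P}}$ and $J_{\mathcal{P}}$ are the identity and all-one matrices indexed by $\mathcal{P}$. *)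

(* Defs.v *)
From HB Require Import structures.
From mathcomp Require Import all_boot all_order all_algebra all_field.
Unset Printing Implicit Defensive.
Import GRing.Theory Num.Theory.

Local Open Scope ring_scope.

(* Vectors of F^N, N = n+1 : row vectors 'rV[F]_N.  A subspace of F^N is
   represented by its (finite) set of vectors. *)
Section PG.
Variables (F : finFieldType) (N : nat).
Notation vec := 'rV[F]_N.

Definition is_subspace (U : {set vec}) : bool :=
  (0 \in U) && [forall u in U, forall v in U, forall a : F, a *: u + v \in U].

Definition sdim (U : {set vec}) : nat := \dim (<<enum U>>%VS).

Definition PGpoints : {set {set vec}} :=
  [set U : {set vec} | is_subspace U && (sdim U == 1%N)].

(* maximal flags (U_1 ⊂ ... ⊂ U_n), n = N-1; c i stands for U_(i+1) *)
Definition is_max_flag (c : {ffun 'I_N.-1 -> {set vec}}) : bool :=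
  [forall i, is_subspace (c i) && (sdim (c i) == i.+1)] &&
  [forall i : 'I_N.-1, forall j : 'I_N.-1, (i <= j)%N ==> (c i \subset c j)].

Definition PGflags : {set {ffun 'I_N.-1 -> {set vec}}} :=
  [set c | is_max_flag c].

(* type of the flag c w.r.t. the point X: the smallest k in [n] with
   X ⊆ U_k, and n+1 if there is none.  (enum 'I_n is increasing, and
   find returns n when no index satisfies the predicate.) *)
Definition flag_type (c : {ffun 'I_N.-1 -> {set vec}}) (X : {set vec}) : nat :=
  (find (fun i : 'I_N.-1 => X \subset c i) (enum 'I_N.-1)).+1.

Definition Tmat (i : nat) (c : {ffun 'I_N.-1 -> {set vec}}) (X : {set vec}) : rat :=
  (flag_type c X == i)%:R.

Definition Fmat (m j : nat) (c : {ffun 'I_N.-1 -> {set vec}}) (X : {set vec}) : rat :=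
  (#|F| ^ j)%:R * (\sum_(m - j + 1 <= i < m + 1) Tmat i c X)
  - \sum_(m + 1 <= i < m + j + 1) Tmat i c X.

Definition trmul (A B : {ffun 'I_N.-1 -> {set vec}} -> {set vec} -> rat)
  (X Y : {set vec}) : rat :=
  \sum_(c in PGflags) A c X * B c Y.

Definition E1 (X Y : {set vec}) : rat :=
  (X == Y)%:R - (#|PGpoints|%:R)^-1.

End PG.

(* Main.v *)
Require Import Defs.
From HB Require Import structures.
From mathcomp Require Import all_boot all_order all_algebra all_field.
From mathcomp Require Import ring zify.
Import GRing.Theory Num.Theory.
Local Open Scope ring_scope.
Set Implicit Arguments.
Unset Strict Implicit.

Section Sub.
Variables (F : finFieldType) (N : nat).
Local Notation vec := 'rV[F]_N.
Local Notation q := #|F|.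
Local Notation is_subspace := (is_subspace F N).
Local Notation sdim := (sdim F N).

Lemma subspaceP (U : {set vec}) :
  reflect (0 \in U /\ forall a u v, u \in U -> v \in U -> a *: u + v \in U)
          (is_subspace U).
Proof.
apply: (iffP andP) => [[H0 /forallP H]|[H0 H]]; split => //.
  move=> a u v uU vU; move: (H u); rewrite uU /= => /forallP/(_ v).
  by rewrite vU /= => /forallP.
apply/forallP=> u; apply/implyP=> uU; apply/forallP=> v; apply/implyP=> vU.
by apply/forallP=> a; exact: H.
Qed.

Lemma subspaceD U u v : is_subspace U -> u \in U -> v \in U -> u + v \in U.
Proof. by move=> /subspaceP[_ H] uU vU; rewrite -[u]scale1r H. Qed.

Lemma subspaceZ U a u : is_subspace U -> u \in U -> a *: u \in U.
Proof. by move=> /subspaceP[H0 H] uU; rewrite -[_ *: _]addr0 H. Qed.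

Lemma subspace0 U : is_subspace U -> 0 \in U.
Proof. by case/subspaceP. Qed.

Lemma subspace_span U : is_subspace U -> forall v, (v \in <<enum U>>%VS) = (v \in U).
Proof.
move=> sU v; apply/idP/idP => [vW|vU]; last by apply: memv_span; rewrite mem_enum.
have := coord_span (X := in_tuple (enum U)) vW => ->.
apply: (big_ind (fun x => x \in U)); first exact: subspace0.
  by move=> x y; apply: subspaceD.
move=> i _; apply: subspaceZ => //.
by rewrite -mem_enum; apply: mem_nth.
Qed.

Lemma card_subspace U : is_subspace U -> #|U| = (q ^ sdim U)%N.
Proof.
move=> sU; rewrite /sdim -card_vspace; apply: eq_card => v.
by rewrite -subspace_span.
Qed.

Lemma q_gt1 : (1 < q)%N.
Proof. exact: finNzRing_gt1. Qed.

Lemma sdim_card U k : is_subspace U -> (sdim U == k) = (#|U| == q ^ k)%N.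
Proof. by move=> sU; rewrite card_subspace // eqn_exp2l // q_gt1. Qed.


Definition line (v : vec) : {set vec} := [set a *: v | a : F].

Lemma line_sub U v : is_subspace U -> (line v \subset U) = (v \in U).
Proof.
move=> sU; apply/subsetP/idP => [H|vU x /imsetP[a _ ->]]; last exact: subspaceZ.
by rewrite -[v]scale1r H //; apply/imsetP; exists 1.
Qed.

Lemma line_subspace v : is_subspace (line v).
Proof.
apply/subspaceP; split; first by apply/imsetP; exists 0; rewrite ?scale0r.
move=> a u w /imsetP[b _ ->] /imsetP[c _ ->]; apply/imsetP; exists (a * b + c) => //.
by rewrite scalerDl scalerA.
Qed.

Lemma line_mem v : v \in line v.
Proof. by apply/imsetP; exists 1; rewrite ?scale1r. Qed.

Lemma card_line v : v != 0 -> #|line v| = q.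
Proof.
move=> nz; rewrite card_imset ?cardT ?size_enum //.
by move=> a b /eqP; rewrite -subr_eq0 -scalerBl scaler_eq0 (negPf nz) orbF subr_eq0 => /eqP.
Qed.

Local Notation points := (PGpoints F N).

Lemma line_point v : v != 0 -> line v \in points.
Proof.
move=> nz; rewrite inE line_subspace /=.
by rewrite sdim_card ?line_subspace // card_line ?expn1.
Qed.

Lemma point_subspace X : X \in points -> is_subspace X.
Proof. by rewrite inE => /andP[]. Qed.

Lemma card_point X : X \in points -> #|X| = q.
Proof. by rewrite inE => /andP[sX]; rewrite sdim_card // expn1 => /eqP. Qed.

Lemma subspace_eq (U V : {set vec}) : is_subspace U -> U \subset V -> (#|V| <= #|U|)%N -> U = V.
Proof. by move=> _ sUV cVU; apply/eqP; rewrite eqEcard sUV. Qed.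

Lemma point_line X v : X \in points -> v \in X -> v != 0 -> X = line v.
Proof.
move=> pX vX nz; apply/esym/subspace_eq; rewrite ?line_subspace ?line_sub ?point_subspace //.
by rewrite card_point ?card_line.
Qed.

Lemma pointP X : reflect (exists2 v, v != 0 & X = line v) (X \in points).
Proof.
apply: (iffP idP) => [pX|[v nz ->]]; last exact: line_point.
have [v /andP[vnz vX]] : exists v, (v != 0) && (v \in X).
  case: (boolP [exists v, (v != 0) && (v \in X)]) => [/existsP //|/existsPn H].
  have := q_gt1; rewrite -(card_point pX) ltnNge => /negP; case.
  apply: (leq_trans (subset_leq_card (B := [set 0 : vec]) _)); last by rewrite cards1.
  by apply/subsetP=> x xX; rewrite inE; have := H x; rewrite xX andbT negbK.
by exists v => //; apply: point_line.
Qed.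


Lemma predS_true n : ((true + n).-1 = n)%N. Proof. by []. Qed.

Lemma count_points W : is_subspace W ->
  (q.-1 * #|[set X in points | X \subset W]|)%N = (#|W|).-1.
Proof.
move=> sW; set S := [set X in points | X \subset W].
rewrite (cardsD1 (0 : vec) W) subspace0 //; rewrite predS_true -[#|W :\ _|]sum1_card.
transitivity (\sum_(v in W :\ (0 : vec)%R) \sum_(X in S) (v \in X : nat))%N; last first.
  apply: eq_bigr => v; rewrite !inE => /andP[nz vW].
  have lS : line v \in S by rewrite inE line_point // line_sub.
  rewrite (bigD1 (line v)) //= line_mem big1 // => X /andP[XS Xne].
  case vX: (v \in X) => //; move: XS; rewrite inE => /andP[pX _].
  by rewrite (point_line pX vX nz) eqxx in Xne.
rewrite exchange_big /= mulnC -sum_nat_const; apply: eq_bigr => X.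
rewrite inE => /andP[pX XW].
rewrite -(card_point pX) (cardsD1 (0 : vec) X) subspace0 ?point_subspace //; rewrite predS_true.
rewrite -sum1_card [RHS]big_mkcond [LHS]big_mkcond /=; apply: eq_bigr => v _.
rewrite !inE; case: (v \in X) (v == 0) (v \in W) (subsetP XW v) => [] [] [] //=.
by move=> /(_ isT).
Qed.


Local Notation flags := (PGflags F N).
Local Notation ftype := (flag_type F N).

Lemma flag_subspace c (i : 'I_N.-1) : c \in flags -> is_subspace (c i).
Proof. by rewrite inE => /andP[/forallP/(_ i)/andP[]]. Qed.

Lemma flag_sdim c (i : 'I_N.-1) : c \in flags -> sdim (c i) = i.+1.
Proof. by rewrite inE => /andP[/forallP/(_ i)/andP[_ /eqP]]. Qed.

Lemma flag_mono c (i j : 'I_N.-1) : c \in flags -> (i <= j)%N -> c i \subset c j.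
Proof. by rewrite inE => /andP[_ /forallP/(_ i)/forallP/(_ j)/implyP]. Qed.

Lemma ftype_le c X (i : 'I_N.-1) : c \in flags -> (ftype c X <= i.+1)%N = (X \subset c i).
Proof.
move=> cF; rewrite /flag_type ltnS; set p := (fun i => X \subset c i).
apply/idP/idP => [le|sub].
  have hf : (find p (enum 'I_N.-1) < size (enum 'I_N.-1))%N.
    by rewrite size_enum_ord; apply: leq_ltn_trans le (ltn_ord i).
  rewrite -has_find in hf; have := nth_find i hf.
  have -> : nth i (enum 'I_N.-1) (find p (enum 'I_N.-1)) = Ordinal (leq_ltn_trans le (ltn_ord i)).
    by apply: val_inj; rewrite /= nth_enum_ord // (leq_ltn_trans le (ltn_ord i)).
  by rewrite /p => H; apply: subset_trans H (flag_mono cF _).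
rewrite leqNgt; apply/negP => lt; have := before_find i lt.
have -> : nth i (enum 'I_N.-1) i = i by apply: val_inj; rewrite /= nth_enum_ord.
by rewrite /p sub.
Qed.

Lemma ftype_gt0 c X : (0 < ftype c X)%N.
Proof. by []. Qed.

Lemma ftype_leN c X : (0 < N)%N -> (ftype c X <= N)%N.
Proof.
move=> N0; rewrite /flag_type; apply: (@leq_ltn_trans N.-1); last by rewrite ltn_predL.
by have := find_size (fun i => X \subset c i) (enum 'I_N.-1); rewrite size_enum_ord.
Qed.

Lemma setT_subspace : is_subspace [set: vec].
Proof. by apply/subspaceP; split => [|a u v _ _]; rewrite inE. Qed.

Lemma card_setT : #|[set: vec]| = (q ^ N)%N.
Proof. by rewrite cardsT card_mx mul1n. Qed.

Lemma count_type c k : c \in flags -> (0 < N)%N -> (k <= N)%N ->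
  (q.-1 * #|[set Y in points | ftype c Y <= k]|)%N = (q ^ k).-1.
Proof.
move=> cF N0 kN; case: k kN => [|k] kN.
  rewrite expn0 (_ : [set _ in _ | _] = set0) ?cards0 ?muln0 //.
  by apply/setP => Y; rewrite !inE ltn0 andbF.
have [kN'|kN'] := ltnP k N.-1.
  rewrite (_ : [set _ in _ | _] = [set Y in points | Y \subset c (Ordinal kN')]).
    rewrite count_points ?flag_subspace // card_subspace ?flag_subspace //.
    by rewrite flag_sdim.
  by apply/setP => Y; rewrite !inE -(ftype_le Y (Ordinal kN') cF).
have kE : k.+1 = N by apply/eqP; rewrite eqn_leq kN /= -(prednK N0) ltnS.
rewrite (_ : [set _ in _ | _] = [set Y in points | Y \subset [set: vec]]).
  by rewrite count_points ?setT_subspace // card_setT kE.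
by apply/setP => Y; rewrite !inE subsetT kE ftype_leN.
Qed.

End Sub.

Lemma sum_ind_range (t a b : nat) :
  (\sum_(a <= i < b) ((t == i)%:R : rat)) = ((a <= t) && (t < b))%N%:R.
Proof.
elim: b => [|b IH]; first by rewrite big_geq // ltn0 andbF.
case: (leqP a b) => ab.
  rewrite big_nat_recr //= IH; case: (ltngtP t b) => [tb|tb|->].
  - by rewrite ltnS (ltnW tb) addr0.
  - have -> : (t < b.+1)%N = false by rewrite ltnS leqNgt tb.
    by rewrite !andbF addr0.
  - by rewrite ab ltnSn andbF add0r.
rewrite big_geq //; case: (leqP a t) => //= at'.
by rewrite ltnNge (leq_trans ab at').
Qed.

Lemma ind_diff (t k1 k2 : nat) : (k1 <= k2)%N ->
  ((k1.+1 <= t) && (t < k2.+1))%N%:R = ((t <= k2)%N%:R - (t <= k1)%N%:R : rat).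
Proof.
move=> k12; rewrite ltnS; case: (leqP t k1) => tk1 /=.
  by rewrite (leq_trans tk1 k12) subrr.
by case: (t <= k2)%N; rewrite ?subr0.
Qed.

Lemma sum_bool_card (T : finType) (A : {set T}) (P : pred T) :
  (\sum_(x in A) (P x : nat))%N = #|[set x in A | P x]|.
Proof.
rewrite -sum1_card big_mkcond [RHS]big_mkcond; apply: eq_bigr => x _.
by rewrite inE; case: (x \in A); case: (P x).
Qed.

Section RowSum.
Variables (F : finFieldType) (N : nat).
Local Notation vec := 'rV[F]_N.
Local Notation q := #|F|.
Local Notation points := (PGpoints F N).
Local Notation flags := (PGflags F N).
Local Notation ftype := (flag_type F N).
Local Notation Q := (#|F|%:R : rat).

Lemma Fmat_eq m j c Y : (j <= m)%N ->
  Fmat F N m j c Y = Q ^+ j * ((ftype c Y <= m)%N%:R - (ftype c Y <= m - j)%N%:R)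
                     - ((ftype c Y <= m + j)%N%:R - (ftype c Y <= m)%N%:R).
Proof.
move=> jm; rewrite /Fmat /Tmat !sum_ind_range !addn1 natrX.
by rewrite !ind_diff ?leq_subr ?leq_addr.
Qed.

Lemma cnt_eq c k : c \in flags -> (0 < N)%N -> (k <= N)%N ->
  (\sum_(Y in points) ((ftype c Y <= k)%N%:R : rat)) * (Q - 1) = Q ^+ k - 1.
Proof.
move=> cF N0 kN; rewrite -natr_sum sum_bool_card.
have := count_type (k := k) cF N0 kN => /(congr1 (fun n => n%:R : rat)).
have q0 : (0 < q)%N by apply: ltnW (q_gt1 F).
have qk0 : (0 < q ^ k)%N by rewrite expn_gt0 q0.
rewrite natrM mulrC -!subn1 !natrB // natrX => -> //.
Qed.

Lemma Fmat_rowsum m j c : c \in flags -> (0 < N)%N -> (j <= m)%N -> (m + j <= N)%N ->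
  \sum_(Y in points) Fmat F N m j c Y = 0.
Proof.
move=> cF N0 jm mjN.
have Q1 : Q - 1 != 0 by rewrite subr_eq0 pnatr_eq1 neq_ltn (q_gt1 F) orbT.
apply: (mulIf Q1); rewrite mul0r.
under eq_bigr do rewrite Fmat_eq //.
rewrite sumrB -mulr_sumr !sumrB.
set a := \sum_(i in points) _.
set b := \sum_(i in points) _.
set d := \sum_(i in points) _.
have -> : (Q ^+ j * (a - b) - (d - a)) * (Q - 1) =
   Q ^+ j * (a * (Q - 1) - b * (Q - 1)) - (d * (Q - 1) - a * (Q - 1)) by ring.
have mN : (m <= N)%N by apply: leq_trans (leq_addr j m) mjN.
rewrite /a /b /d !cnt_eq // ?(leq_trans (leq_subr _ _) mN) //.
have [r ->] : exists r, m = (j + r)%N by exists (m - j)%N; rewrite subnKC.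
rewrite addKn -addnA !exprD; ring.
Qed.

End RowSum.

Section Act.
Variables (F : finFieldType) (N : nat).
Local Notation vec := 'rV[F]_N.
Local Notation q := #|F|.
Local Notation points := (PGpoints F N).
Local Notation flags := (PGflags F N).
Local Notation ftype := (flag_type F N).
Local Notation is_subspace := (is_subspace F N).
Local Notation sdim := (sdim F N).
Local Notation line := (@line F N).

Definition act (A : 'M[F]_N) (S : {set vec}) : {set vec} := [set v *m A | v in S].
Definition actf (A : 'M[F]_N) (c : {ffun 'I_N.-1 -> {set vec}}) :
  {ffun 'I_N.-1 -> {set vec}} := [ffun i => act A (c i)].

Variable A : 'M[F]_N.
Hypothesis Au : A \in unitmx.

Lemma actK S : act (invmx A) (act A S) = S.
Proof.
rewrite /act -imset_comp; rewrite (eq_imset _ (fun v => mulmxK Au v)).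
by rewrite imset_id.
Qed.

Lemma act_inj : injective (act A).
Proof. exact: can_inj actK. Qed.

Lemma act_subset S T : (act A S \subset act A T) = (S \subset T).
Proof.
apply/idP/idP => [H|H]; last exact: imsetS.
by rewrite -(actK S) -(actK T); apply: imsetS.
Qed.

Lemma act_subspace_gen (B : 'M[F]_N) S : is_subspace S -> is_subspace (act B S).
Proof.
move=> /subspaceP[H0 H]; apply/subspaceP; split.
  by apply/imsetP; exists 0 => //; rewrite mul0mx.
move=> a u v /imsetP[u' u'S ->] /imsetP[v' v'S ->]; apply/imsetP.
by exists (a *: u' + v'); [apply: H | rewrite mulmxDl scalemxAl].
Qed.

Lemma act_subspace S : is_subspace (act A S) = is_subspace S.
Proof.
apply/idP/idP => [H|]; last exact: act_subspace_gen.
by rewrite -(actK S); apply: act_subspace_gen.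
Qed.

Lemma card_act S : #|act A S| = #|S|.
Proof. by apply: card_imset; apply: can_inj (mulmxK Au). Qed.

Lemma act_sdim S : is_subspace S -> sdim (act A S) = sdim S.
Proof.
move=> sS; apply: (expnI (q_gt1 F)).
by rewrite -!card_subspace ?act_subspace // card_act.
Qed.

Lemma act_point X : (act A X \in points) = (X \in points).
Proof.
rewrite !inE act_subspace; case sX: (is_subspace X) => //=.
by rewrite act_sdim.
Qed.

Lemma act_line v : act A (line v) = line (v *m A).
Proof.
rewrite /act /line -imset_comp; apply: eq_imset => a /=.
by rewrite scalemxAl.
Qed.

Lemma actfK c : actf (invmx A) (actf A c) = c.
Proof. by apply/ffunP => i; rewrite !ffunE actK. Qed.

Lemma actf_inj : injective (actf A).
Proof. exact: can_inj actfK. Qed.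

Lemma actf_flag c : (actf A c \in flags) = (c \in flags).
Proof.
rewrite !inE /is_max_flag; congr andb.
  by apply: eq_forallb => i; rewrite ffunE act_subspace; case sX: (is_subspace (c i)) => //=; rewrite act_sdim.
apply: eq_forallb => i; apply: eq_forallb => j; by rewrite !ffunE act_subset.
Qed.

Lemma ftype_act c X : ftype (actf A c) (act A X) = ftype c X.
Proof.
rewrite /flag_type; congr S; apply: eq_find => i /=.
by rewrite ffunE act_subset.
Qed.

Lemma trmul_act h m j X Y :
  trmul F N (Tmat F N h) (Fmat F N m j) (act A X) (act A Y) =
  trmul F N (Tmat F N h) (Fmat F N m j) X Y.
Proof.
rewrite /trmul (reindex_inj actf_inj) /=.
apply: eq_big => [c|c _]; first by rewrite actf_flag.
by rewrite /Fmat /Tmat !ftype_act.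
Qed.

End Act.

Section Trans.
Variables (F : finFieldType) (N : nat).
Local Notation vec := 'rV[F]_N.
Local Notation points := (PGpoints F N).
Local Notation line := (@line F N).

Lemma transfer k (U V : 'M[F]_(k, N)) : row_free U -> row_free V ->
  exists2 g, g \in unitmx & U *m g = V.
Proof.
move=> fU fV; have [U1 hU1] := row_freeP fU.
have hV : U *m (U1 *m V) = V by rewrite mulmxA hU1 mul1mx.
have rk : \rank (U *m (U1 *m V)) = \rank U.
  by rewrite hV; move: fU fV; rewrite /row_free => /eqP-> /eqP->.
have [g gu hg] := complete_unitmx rk.
by exists g => //; rewrite -hg hV.
Qed.

Lemma indep_free (x y : vec) : x != 0 -> y != 0 -> ~~ (x <= y)%MS ->
  row_free (col_mx x y).
Proof.
move=> xnz ynz nxy; rewrite /row_free -addsmxE.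
have := mxrank_sum_cap x y; rewrite !rank_rV xnz ynz.
have := mxrank_leqif_sup (capmxSl x y); rewrite rank_rV xnz => -[le eqc].
case: (ltngtP (\rank (x :&: y)) 1) => [lt|gt|e].
- by move: lt; rewrite ltnS leqn0 => /eqP->; rewrite addn0 => ->.
- by move: (leq_ltn_trans le gt); rewrite ltnn.
- by move: eqc; rewrite e eqxx => /esym sx; case/negP: nxy; apply: submx_trans sx (capmxSr x y).
Qed.

Lemma points_indep X Y x y : X \in points -> Y \in points -> X != Y ->
  x != 0 -> X = line x -> y != 0 -> Y = line y -> ~~ (x <= y)%MS.
Proof.
move=> pX pY XY xnz Xe ynz Ye; apply/negP => /sub_rVP[a xE].
have xly : x \in Y by rewrite Ye xE; apply/imsetP; exists a.
by have := point_line pY xly xnz; rewrite -Xe => YX; rewrite YX eqxx in XY.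
Qed.

Lemma trans2 X Y X' Y' : X \in points -> Y \in points -> X' \in points -> Y' \in points ->
  X != Y -> X' != Y' ->
  exists2 A, A \in unitmx & act A X = X' /\ act A Y = Y'.
Proof.
move=> pX pY pX' pY' XY XY'.
have [x xnz Xe] := pointP _ pX; have [y ynz Ye] := pointP _ pY.
have [x' xnz' Xe'] := pointP _ pX'; have [y' ynz' Ye'] := pointP _ pY'.
have [g gu] := transfer (indep_free xnz ynz (points_indep pX pY XY xnz Xe ynz Ye))
                        (indep_free xnz' ynz' (points_indep pX' pY' XY' xnz' Xe' ynz' Ye')).
rewrite mul_col_mx => /eq_col_mx[hx hy].
by exists g => //; rewrite Xe Ye Xe' Ye' !act_line // hx hy.
Qed.

Lemma trans1 X X' : X \in points -> X' \in points ->
  exists2 A, A \in unitmx & act A X = X'.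
Proof.
move=> pX pX'.
have [x xnz Xe] := pointP _ pX; have [x' xnz' Xe'] := pointP _ pX'.
have fr (v : vec) : v != 0 -> row_free v by move=> vnz; rewrite /row_free rank_rV vnz.
have [g gu hx] := transfer (fr _ xnz) (fr _ xnz').
by exists g => //; rewrite Xe Xe' act_line // hx.
Qed.

End Trans.

Section Std.
Variables (F : finFieldType) (N : nat).
Local Notation vec := 'rV[F]_N.
Local Notation q := #|F|.
Local Notation points := (PGpoints F N).
Local Notation flags := (PGflags F N).
Local Notation ftype := (flag_type F N).
Local Notation is_subspace := (is_subspace F N).
Local Notation line := (@line F N).

Definition Sp k (M : 'M[F]_(k, N)) : {set vec} := [set v : vec | (v <= M)%MS].

Lemma Sp_subspace k (M : 'M[F]_(k, N)) : is_subspace (Sp M).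
Proof.
apply/subspaceP; split; first by rewrite inE sub0mx.
move=> a u v; rewrite !inE => uM vM.
by rewrite addmx_sub // scalemx_sub.
Qed.

Lemma card_Sp k (M : 'M[F]_(k, N)) : #|Sp M| = (q ^ \rank M)%N.
Proof.
rewrite (_ : Sp M = [set w *m row_base M | w in [set: 'rV[F]_(\rank M)]]).
  by rewrite card_imset ?cardsT ?card_mx ?mul1n //; apply: row_free_inj; apply: row_base_free.
apply/setP => v; rewrite inE; apply/idP/imsetP => [|[w _ ->]].
  by rewrite -(eq_row_base M) => /submxP[D ->]; exists D; rewrite ?inE.
by rewrite -(eq_row_base M) submxMl.
Qed.

Lemma mul_pid_entry k (v : vec) (j : 'I_N) :
  (v *m (pid_mx k : 'M[F]_N)) 0 j = if (j < k)%N then v 0 j else 0.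
Proof.
rewrite mxE (bigD1 j) //= big1 => [|l ne]; last first.
  by rewrite mxE; move: ne; rewrite -val_eqE => /negPf -> /=; rewrite mulr0.
by rewrite mxE eqxx /=; case: (j < k)%N; rewrite ?mulr1 ?mulr0 addr0.
Qed.

Lemma memSp_pid k (v : vec) : (k <= N)%N ->
  (v \in Sp (pid_mx k : 'M[F]_N)) = [forall j : 'I_N, (k <= j)%N ==> (v 0 j == 0)].
Proof.
move=> kN; rewrite inE.
have -> : (v <= (pid_mx k : 'M[F]_N))%MS = (v *m pid_mx k == v).
  apply/idP/eqP => [/submxP[D ->]|<-]; last exact: submxMl.
  by rewrite -mulmxA pid_mx_id.
apply/eqP/forallP => [H j|H].
  apply/implyP => kj; have := congr1 (fun w : vec => w 0 j) H.
  by rewrite mul_pid_entry ltnNge kj /= => <-.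
apply/rowP => j; rewrite mul_pid_entry; case: ltnP => // kj.
by have /eqP -> := implyP (H j) kj.
Qed.

Definition stdf : {ffun 'I_N.-1 -> {set vec}} :=
  [ffun i : 'I_N.-1 => Sp (pid_mx i.+1 : 'M[F]_N)].

Lemma ord_le (i : 'I_N.-1) : (i.+1 <= N)%N.
Proof. by apply: leq_trans (ltn_ord i) _; apply: leq_pred. Qed.

Lemma stdf_flag : stdf \in flags.
Proof.
rewrite inE; apply/andP; split; apply/forallP => i.
  rewrite ffunE Sp_subspace /= sdim_card ?Sp_subspace //.
  by rewrite card_Sp rank_pid_mx ?ord_le.
apply/forallP => j; apply/implyP => ij; rewrite !ffunE; apply/subsetP => v.
rewrite !memSp_pid ?ord_le // => /forallP H; apply/forallP => l; apply/implyP => jl.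
by apply: (implyP (H l)); apply: leq_trans jl.
Qed.

Lemma delta_Sp (r : 'I_N) k : (k <= N)%N ->
  (delta_mx 0 r \in Sp (pid_mx k : 'M[F]_N)) = (r < k)%N.
Proof.
move=> kN; rewrite memSp_pid //; apply/forallP/idP => [H|rk j].
  rewrite ltnNge; apply/negP => kr; have := implyP (H r) kr.
  by rewrite mxE !eqxx /= oner_eq0.
apply/implyP => kj; rewrite mxE eqxx /=.
have jr : (j == r) = false by apply/negP => /eqP jr; move: kj; rewrite jr leqNgt rk.
by rewrite jr.
Qed.

Lemma ftype_std (r : 'I_N) : (r < N.-1)%N ->
  ftype stdf (line (delta_mx 0 r)) = r.+1.
Proof.
move=> rN; apply/eqP; rewrite eqn_leq; apply/andP; split.
  rewrite (ftype_le _ (Ordinal rN) stdf_flag) ffunE line_sub ?Sp_subspace //.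
  by rewrite delta_Sp ?ord_le.
case: r rN => [[|r'] rlt] rN //=.
rewrite ltnNge; apply/negP.
have rN' : (r' < N.-1)%N by apply: ltnW.
rewrite (ftype_le _ (Ordinal rN') stdf_flag) ffunE line_sub ?Sp_subspace //.
by rewrite delta_Sp ?(ord_le (Ordinal rN')) //= ltnn.
Qed.

End Std.

Section Main.
Variables (F : finFieldType) (N m j h : nat).
Local Notation vec := 'rV[F]_N.
Local Notation q := #|F|.
Local Notation points := (PGpoints F N).
Local Notation flags := (PGflags F N).
Local Notation ftype := (flag_type F N).
Local Notation line := (@line F N).
Local Notation Q := (#|F|%:R : rat).
Local Notation G := (trmul F N (Tmat F N h) (Fmat F N m j)).

Hypotheses (N2 : (2 <= N)%N) (jm : (j <= m)%N) (mjN : (m + j <= N)%N).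

Definition dval : rat := Q ^+ j * ((h <= m)%N%:R - (h <= m - j)%N%:R)
                     - ((h <= m + j)%N%:R - (h <= m)%N%:R).

Lemma G_diag X : G X X = #|[set c in flags | ftype c X == h]|%:R * dval.
Proof.
rewrite /trmul -sum_bool_card natr_sum mulr_suml; apply: eq_bigr => c _.
rewrite Fmat_eq // /Tmat; case: eqP => [->|]; first by rewrite /dval.
by rewrite !mul0r.
Qed.

Lemma G_rowsum X : \sum_(Y in points) G X Y = 0.
Proof.
rewrite /trmul exchange_big /=; apply: big1 => c cF.
rewrite -mulr_sumr Fmat_rowsum ?mulr0 //; by apply: leq_trans N2.
Qed.

Lemma G_act A X Y : A \in unitmx -> G (act A X) (act A Y) = G X Y.
Proof. by move=> Au; rewrite trmul_act. Qed.

Lemma G_diag_const X X' : X \in points -> X' \in points -> G X X = G X' X'.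
Proof.
move=> pX pX'; have [A Au <-] := trans1 pX pX'.
by rewrite G_act.
Qed.

Lemma G_off_const X Y X' Y' : X \in points -> Y \in points -> X' \in points -> Y' \in points ->
  X != Y -> X' != Y' -> G X Y = G X' Y'.
Proof.
move=> pX pY pX' pY' XY XY'; have [A Au [<- <-]] := trans2 pX pY pX' pY' XY XY'.
by rewrite G_act.
Qed.

Lemma points_card : (2 <= #|points|)%N.
Proof.
have := count_points (setT_subspace F N); rewrite card_setT.
rewrite (_ : [set X in points | X \subset setT] = points); last first.
  by apply/setP => X; rewrite inE subsetT andbT.
have q2 := q_gt1 F.
have qN : (q * q <= q ^ N)%N.
  by rewrite -[(q * q)%N]/(q ^ 2)%N leq_exp2l.
move: qN q2; set a := (q ^ N)%N; set p := #|points|; set r := #|F| => qN q2 H.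
nia.
Qed.

Lemma G_form X0 : X0 \in points -> forall X Y, X \in points -> Y \in points ->
  G X Y = (G X0 X0 * #|points|%:R / (#|points|%:R - 1)) * E1 F N X Y.
Proof.
move=> pX0.
have cD : #|points| = (1 + #|points :\ X0|)%N by rewrite (cardsD1 X0) pX0.
have [Y0 pY0 ne] : exists2 Y0, Y0 \in points & Y0 != X0.
  have : (0 < #|points :\ X0|)%N by have := points_card; rewrite cD.
  by case/card_gt0P => Y0; rewrite in_setD1 => /andP[ne pY0]; exists Y0.
set d := G X0 X0; set o := G X0 Y0; set p := (#|points|%:R : rat).
have Hd X : X \in points -> G X X = d by move=> pX; apply: G_diag_const.
have Ho X Y : X \in points -> Y \in points -> X != Y -> G X Y = o.
  by move=> pX pY XY; apply: (G_off_const pX pY pX0 pY0 XY); rewrite eq_sym.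
have p0 : p != 0 by rewrite /p pnatr_eq0 -lt0n (leq_trans _ points_card).
have p1 : p - 1 != 0 by rewrite subr_eq0 /p pnatr_eq1 neq_ltn points_card orbT.
have rs : d + o * (p - 1) = 0.
  have := G_rowsum X0; rewrite (bigD1 X0) //=.
  rewrite (eq_bigr (fun _ => o)) => [|Y /andP[pY ne']]; last by apply: Ho; rewrite // eq_sym.
  rewrite (eq_bigl (fun Y => Y \in points :\ X0)) => [|Y]; last by rewrite !inE andbC.
  by rewrite sumr_const -mulr_natr /p cD natrD [1 + _]addrC addrK.
move=> X Y pX pY; rewrite /E1; case: eqP => [<-|/eqP XY].
  rewrite Hd // /= -/p; field; by rewrite p0 p1.
rewrite Ho //.
have oE : o = - d / (p - 1).
  by apply: (mulIf p1); rewrite divfK //; apply/eqP; rewrite -addr_eq0 addrC rs.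
rewrite oE /= -/p; field; by rewrite p0 p1.
Qed.

End Main.

Lemma delta_nz (F : finFieldType) N (r : 'I_N) : (delta_mx 0 r : 'rV[F]_N) != 0.
Proof.
apply/eqP => /matrixP/(_ 0 r); rewrite !mxE !eqxx /= => /eqP.
by rewrite oner_eq0.
Qed.

Theorem mainTheorem6 (F : finFieldType) (m : nat) (hm : (1 <= m)%N) :
  forall j : nat, (1 <= j <= m)%N ->
    (exists2 alpha : rat, alpha != 0 &
       forall X Y, X \in PGpoints F (2 * m) -> Y \in PGpoints F (2 * m) ->
         trmul F (2 * m) (Tmat F (2 * m) (m - j + 1)) (Fmat F (2 * m) m j) X Y
         = alpha * E1 F (2 * m) X Y)
    /\
    (forall h : nat, (1 <= h)%N -> (h < m - j + 1)%N ->
       forall X Y, X \in PGpoints F (2 * m) -> Y \in PGpoints F (2 * m) ->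
         trmul F (2 * m) (Tmat F (2 * m) h) (Fmat F (2 * m) m j) X Y = 0).
Proof.
move=> j /andP[j1 jm].
have N2 : (2 <= 2 * m)%N by rewrite -[2%N]muln1 leq_mul2l.
have mjN : (m + j <= 2 * m)%N by rewrite mul2n -addnn leq_add2l.
have rlt : (m - j < 2 * m)%N by apply: leq_ltn_trans (leq_subr _ _) _; rewrite mul2n -addnn -addn1 leq_add2l.
have rlt' : (m - j < (2 * m).-1)%N.
  rewrite -subn1; apply: leq_trans (_ : (m <= _)%N); last by rewrite mul2n -addnn -addnBA // leq_addr.
  by rewrite -(subnKC jm) addnC addnK -(subnKC j1) addnA addn1 ltnS leq_addr.
set X0 := line (delta_mx 0 (Ordinal rlt) : 'rV[F]_(2 * m)).
have pX0 : X0 \in PGpoints F (2 * m) by apply: line_point; apply: delta_nz.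
split.
  set h := (m - j + 1)%N.
  exists (trmul F (2 * m) (Tmat F (2 * m) h) (Fmat F (2 * m) m j) X0 X0
          * #|PGpoints F (2 * m)|%:R / (#|PGpoints F (2 * m)|%:R - 1)); last first.
    by move=> X Y pX pY; apply: G_form.
  have p0 : #|PGpoints F (2 * m)|%:R != 0 :> rat.
    by rewrite pnatr_eq0 -lt0n (leq_trans _ (points_card F N2 jm mjN)).
  have p1 : #|PGpoints F (2 * m)|%:R - 1 != 0 :> rat.
    by rewrite subr_eq0 pnatr_eq1 neq_ltn (points_card F N2 jm mjN) orbT.
  rewrite !mulf_neq0 ?invr_eq0 // G_diag // mulf_neq0 //.
    rewrite pnatr_eq0 -lt0n; apply/card_gt0P; exists (stdf F (2 * m)).
    by rewrite inE stdf_flag /= /X0 ftype_std // /h addn1.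
  have e1 : ((m - j).+1 <= m)%N by lia.
  have e3 : ((m - j).+1 <= m + j)%N by lia.
  rewrite /dval /h addn1 e1 e3 ltnn /=.
  by rewrite subrr !subr0 mulr1 expf_neq0 // pnatr_eq0 -lt0n (ltnW (q_gt1 F)).
move=> h h1 hlt X Y pX pY.
rewrite (G_form h N2 jm mjN pX0) // G_diag // /dval.
have hmj : (h <= m - j)%N by lia.
have hm' : (h <= m)%N by lia.
have hmj' : (h <= m + j)%N by lia.
rewrite hmj hm' hmj'.
by rewrite !subrr mulr0 subr0 mulr0 !mul0r.
Qed.
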